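(* For every integer $n$, \[ p(n) + \sum_{j\geq 1} (-1)^j \Big( p(n-j^2) + p(n-2j^2) \Big) = \begin{cases} 0 & \text{if } n \text{ is odd},\\ qq(n) & \text{if } n \text{ is even}, \end{cases} \] that is, $p(n) - p(n-1) - p(n-2) + p(n-4) + p(n-8) - p(n-9) - p(n-18) + p(n-16) + \cdots$ equals $0$ for odd $n$ and $qq(n)$ for even $n$.
   Context: $p(n)$ denotes the number of partitions of the integer $n$ (with $p(0)=1$ and $p(n)=0$ for $n<0$). $qq(n)$ denotes the number of partitions of $n$ into distinct odd parts (with $qq(n)=0$ for $n<0$). *)

(* Defs.v *)
From mathcomp Require Import all_boot all_order all_algebra.
Set Implicit Arguments. Unset Strict Implicit. Unset Printing Implicit Defensive.
Import GRing.Theory Num.Theory.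

(* A partition of n is encoded by its multiplicity function:
   m i = number of parts equal to i.+1 (parts are 1..n, multiplicities <= n). *)
Definition npart (n : nat) : nat :=
  #|[set m : {ffun 'I_n -> 'I_n.+1} | (\sum_(i < n) i.+1 * m i)%N == n]|.

(* Partitions of n into distinct odd parts: m i = true iff i.+1 is a part. *)
Definition nqq (n : nat) : nat :=
  #|[set m : {ffun 'I_n -> bool} |
       [forall i, m i ==> odd i.+1] && ((\sum_(i < n) i.+1 * m i)%N == n)]|.

Definition p (n : int) : int :=
  match n with Posz k => (npart k)%:Z | Negz _ => 0%R end.
Definition qq (n : int) : int :=
  match n with Posz k => (nqq k)%:Z | Negz _ => 0%R end.

(* Main.v *)
Require Import Defs.
From mathcomp Require Import all_boot all_order all_algebra.
Import GRing.Theory Num.Theory.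
Local Open Scope ring_scope.
From mathcomp Require Import all_boot all_order all_algebra.
From mathcomp Require Import zify ring lra.
Require Import Defs.
Import GRing.Theory Num.Theory.
Local Open Scope ring_scope.

Definition cong (N : nat) (a b : {poly int}) := exists c, a - b = 'X^N * c.

Lemma cong_refl N a : cong N a a. Proof. by exists 0; rewrite subrr mulr0. Qed.
Lemma cong_sym N a b : cong N a b -> cong N b a.
Proof. by case=> c h; exists (-c); rewrite mulrN -h opprB. Qed.
Lemma cong_trans N a b c : cong N a b -> cong N b c -> cong N a c.
Proof. case=> u hu [v hv]; exists (u+v); rewrite mulrDr -hu -hv; ring. Qed.
Lemma cong_add N a b c d : cong N a b -> cong N c d -> cong N (a+c) (b+d).
Proof. case=> u hu [v hv]; exists (u+v); rewrite mulrDr -hu -hv; ring. Qed.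
Lemma cong_opp N a b : cong N a b -> cong N (-a) (-b).
Proof. case=> u hu; exists (-u); rewrite mulrN -hu; ring. Qed.
Lemma cong_mul N a b c d : cong N a b -> cong N c d -> cong N (a*c) (b*d).
Proof.
case=> u hu [v hv]; exists (u*c + b*v).
have -> : a * c - b * d = (a - b) * c + b * (c - d) by ring.
rewrite hu hv; ring.
Qed.
Lemma cong_le N M a b : (M <= N)%N -> cong N a b -> cong M a b.
Proof.
move=> hMN [u hu]; exists ('X^(N - M) * u).
by rewrite hu mulrA -exprD subnKC.
Qed.
Lemma cong_coef N a b i : cong N a b -> (i < N)%N -> a`_i = b`_i.
Proof.
case=> u hu hi; apply/eqP; rewrite -subr_eq0 -coefB hu coefXnM hi //.
Qed.
Lemma cong_sum N (I : Type) (r : seq I) (P : pred I) (F G : I -> {poly int}) :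
  (forall i, P i -> cong N (F i) (G i)) ->
  cong N (\sum_(i <- r | P i) F i) (\sum_(i <- r | P i) G i).
Proof.
move=> h; apply: (big_ind2 (cong N)) => //; first exact: cong_refl.
by move=> *; apply: cong_add.
Qed.
Lemma cong_prod N (I : Type) (r : seq I) (P : pred I) (F G : I -> {poly int}) :
  (forall i, P i -> cong N (F i) (G i)) ->
  cong N (\prod_(i <- r | P i) F i) (\prod_(i <- r | P i) G i).
Proof.
move=> h; apply: (big_ind2 (cong N)) => //; first exact: cong_refl.
by move=> *; apply: cong_mul.
Qed.

Arguments cong_sym {N a b}. Arguments cong_trans {N a b c}.
Arguments cong_add {N a b c d}. Arguments cong_opp {N a b}.
Arguments cong_mul {N a b c d}. Arguments cong_le {N M a b}.
Arguments cong_coef {N a b i}.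

Fixpoint qb (x : {poly int}) (m k : nat) : {poly int} :=
  match m, k with
  | 0, 0 => 1
  | 0, _.+1 => 0
  | _.+1, 0 => 1
  | m'.+1, k'.+1 => qb x m' k' + x ^+ k'.+1 * qb x m' k'.+1
  end.

Definition qp (x : {poly int}) (k : nat) := \prod_(i < k) (1 - x ^+ i.+1).

Lemma qb0 x m : qb x m 0 = 1. Proof. by case: m. Qed.
Lemma qb_gt x m k : (m < k)%N -> qb x m k = 0.
Proof.
elim: m k => [|m IH] [|k] //= h.
by rewrite !IH ?mulr0 ?addr0 //; lia.
Qed.
Lemma qpS x k : qp x k.+1 = qp x k * (1 - x ^+ k.+1).
Proof. by rewrite /qp big_ord_recr. Qed.
Lemma qp0 x : qp x 0 = 1. Proof. by rewrite /qp big_ord0. Qed.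

Lemma qb_prod x m k : (k <= m)%N -> qb x m k * qp x k * qp x (m - k) = qp x m.
Proof.
elim: m k => [|m IH] [|k] //= h.
- by rewrite qp0 !mulr1.
- by rewrite qp0 !mul1r subn0.
- rewrite subSS.
  case: (ltngtP k m) => hkm; last first.
  + subst k; rewrite (@qb_gt x m m.+1 (ltnSn m)) mulr0 addr0 subnn qpS.
    have := IH m (leqnn m); rewrite subnn => e.
    rewrite qp0 mulr1 in e; rewrite qp0 mulr1 mulrA e //.
  + lia.
  have e1 := IH k (ltnW hkm).
  have e2 := IH k.+1 hkm.
  have hs : (m - k = (m - k.+1).+1)%N by lia.
  have f1 : qp x (m - k) = qp x (m - k.+1) * (1 - x ^+ (m - k)).
    by rewrite {1}hs qpS -hs.
  rewrite qpS f1.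
  have hx : x ^+ k.+1 * x ^+ (m - k) = x ^+ m.+1 by rewrite -exprD; congr (_ ^+ _); lia.
  have -> : (qb x m k + x ^+ k.+1 * qb x m k.+1) * (qp x k * (1 - x ^+ k.+1)) *
    (qp x (m - k.+1) * (1 - x ^+ (m - k))) =
    (qb x m k * qp x k * (qp x (m - k.+1) * (1 - x ^+ (m - k)))) * (1 - x ^+ k.+1)
    + x ^+ k.+1 * (qb x m k.+1 * (qp x k * (1 - x ^+ k.+1)) * qp x (m - k.+1)) *
      (1 - x ^+ (m - k)) by ring.
  rewrite -f1 e1 -(qpS x k) e2.
  have -> : qp x m * (1 - x ^+ k.+1) + x ^+ k.+1 * qp x m * (1 - x ^+ (m - k))
     = qp x m * (1 - x ^+ k.+1 * x ^+ (m - k)) by ring.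
  by rewrite hx qpS.
Qed.

Lemma qbSS x m k : qb x m.+1 k.+1 = qb x m k + x ^+ k.+1 * qb x m k.+1.
Proof. by []. Qed.

Lemma qb_pascal2 x m k : qb x m.+1 k.+1 = x ^+ (m - k) * qb x m k + qb x m k.+1.
Proof.
elim: m k => [|m IH] k.
  by case: k => [|k] /=; rewrite ?mulr0 ?addr0 ?expr0 ?mulr1.
case: k => [|k].
  rewrite (qbSS x m.+1 0) qb0 subn0 mulr1.
  have h1 : qb x m.+1 1 = x ^+ m + qb x m 1 by rewrite IH qb0 subn0 mulr1.
  have h2 : qb x m.+1 1 = 1 + x ^+ 1 * qb x m 1 by rewrite qbSS qb0.
  have e : x ^+ 1 * x ^+ m = x ^+ m.+1 by rewrite -exprD add1n.
  rewrite {1}h1 mulrDr e h2; ring.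
rewrite qbSS [in LHS]IH [in LHS]IH (qbSS x m k) (qbSS x m k.+1) subSS.
case: (ltnP k m) => hkm.
  have hx : x ^+ k.+2 * x ^+ (m - k.+1) = x ^+ (m - k) * x ^+ k.+1.
    by rewrite -!exprD; congr (_ ^+ _); lia.
  rewrite [x ^+ k.+2 * (_ + _)]mulrDr [x ^+ k.+2 * (_ * _)]mulrA hx; ring.
rewrite (@qb_gt x m k.+1); last lia.
rewrite (@qb_gt x m k.+2); last lia.
rewrite !mulr0 !addr0; ring.
Qed.

Definition qbA x m i := match i with k.+2 => x ^+ (m - k) * qb x m k | _ => 0 end.
Definition qbB x m i := match i with k.+1 => (1 + x ^+ k.+1) * qb x m k | _ => 0 end.

Lemma qb_double x m i :
  qb x m.+2 i = qbA x m i + qbB x m i + x ^+ (2 * i) * qb x m i.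
Proof.
case: i => [|[|k]].
- by rewrite /= !qb0 expr0 mul1r !add0r.
- rewrite /= !qb0 add0r mulnS muln0 mulr1; ring.
rewrite qbSS qb_pascal2 (qbSS x m k.+1) /=.
rewrite (_ : (2 * k.+2 = k.+2 + k.+2)%N); last lia.
rewrite exprD; ring.
Qed.

Definition D (i N : nat) : nat := ((if (i <= N)%N then N - i else i - N) ^ 2)%N.

Lemma D_L1 k N : (k <= 2 * N)%N -> (D k.+2 N.+1 + (2 * N - k) = D k N + k.+1)%N.
Proof.
rewrite /D => h; case: (leqP k.+2 N.+1) => h1; case: (leqP k N) => h2; try lia.
- have [a ha] : exists a, N = (k + a.+1)%N by exists (N - k.+1)%N; lia.
  subst N.
  have -> : ((k + a.+1).+1 - k.+2 = a)%N by lia.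
  have -> : (k + a.+1 - k = a.+1)%N by lia.
  have -> : (2 * (k + a.+1) - k = k + 2 * a.+1)%N by lia.
  rewrite !expnS !expn0 !muln1. nia.
- have -> : k = N by lia.
  rewrite !expnS !expn0 !muln1 subnn.
  have -> : (N.+2 - N.+1 = 1)%N by lia.
  lia.
Qed.

Lemma D_L2 k N : D k.+1 N.+1 = D k N.
Proof. by rewrite /D ltnS !subSS. Qed.

Lemma D_L3 k N : (D k N.+1 + 2 * k = D k N + (2 * N).+1)%N.
Proof.
rewrite /D; case: (leqP k N.+1) => h1; case: (leqP k N) => h2; try lia.
- have [a ha] : exists a, N = (k + a)%N by exists (N - k)%N; lia.
  subst N.
  have -> : ((k + a).+1 - k = a.+1)%N by lia.
  have -> : (k + a - k = a)%N by lia.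
  rewrite !expnS !expn0 !muln1. nia.
- have -> : k = N.+1 by lia.
  rewrite subnn subSn // subnn; lia.
Qed.

Lemma widen (F : nat -> {poly int}) a b : (a <= b)%N ->
  (forall i, (a <= i < b)%N -> F i = 0) ->
  \sum_(0 <= i < b) F i = \sum_(0 <= i < a) F i.
Proof.
move=> hab h; rewrite (@big_cat_nat _ _ _ a 0 b _ _ (leq0n a) hab) /=.
rewrite [X in _ + X]big_nat_cond [X in _ + X]big1 ?addr0 // => i /andP[hi _]; exact: h.
Qed.

Definition Gs (x : {poly int}) N := \sum_(0 <= i < (2 * N).+1) (-1) ^+ (i + N) * x ^+ D i N * qb x (2 * N) i.
Definition Op (x : {poly int}) N := \prod_(i < N) (1 - x ^+ (2 * i).+1).

Lemma gauss_step x N : Gs x N.+1 = (1 - x ^+ (2 * N).+1) * Gs x N.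
Proof.
rewrite /Gs (_ : (2 * N.+1 = (2 * N).+2)%N); last lia.
set m := (2 * N)%N.
under eq_bigr do rewrite qb_double !mulrDr.
rewrite !big_split /=.
rewrite (big_nat_recl _ _ _ (leq0n _)) (big_nat_recl _ _ _ (leq0n _)) /= !mulr0 !add0r.
rewrite [X in _ + X + _](big_nat_recl _ _ _ (leq0n _)) /= mulr0 add0r.
have w2 : (m.+1 <= m.+2)%N by lia.
have w3 : (m.+1 <= m.+3)%N by lia.
rewrite [X in _ + X + _](@widen _ m.+1 m.+2 w2); last first.
  by move=> i /andP[hi _]; rewrite (@qb_gt x m i) ?mulr0.
rewrite [X in _ + X](@widen _ m.+1 m.+3 w3); last first.
  by move=> i /andP[hi _]; rewrite (@qb_gt x m i) ?mulr0.
rewrite mulr_sumr -!big_split /=.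
apply: eq_big_nat => i /andP[_ hi].
set q := qb x m i.
set S := (-1) ^+ (i + N) : {poly int}.
have s1 : (-1) ^+ (i.+2 + N.+1) = - S :> {poly int}.
  by rewrite /S (_ : (i.+2 + N.+1 = (i + N).+3)%N) ?addnS ?addSn // !exprS; ring.
have s2 : (-1) ^+ (i.+1 + N.+1) = S :> {poly int}.
  by rewrite /S (_ : (i.+1 + N.+1 = (i + N).+2)%N) ?addnS ?addSn // !exprS; ring.
have s3 : (-1) ^+ (i + N.+1) = - S :> {poly int}.
  by rewrite /S addnS exprS; ring.
have e1 : x ^+ D i.+2 N.+1 * x ^+ (m - i) = x ^+ D i N * x ^+ i.+1.
  by rewrite -!exprD D_L1 //; lia.
have e3 : x ^+ D i N.+1 * x ^+ (2 * i) = x ^+ D i N * x ^+ (2 * N).+1.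
  by rewrite -!exprD D_L3.
rewrite s1 s2 s3 D_L2.
have H : forall (a b c : {poly int}), a * b * (c * q) = a * (b * c) * q by move=> *; ring.
rewrite !H.
rewrite e1 e3; ring.
Qed.

Lemma gauss_fin x N : Gs x N = Op x N.
Proof.
elim: N => [|N IH].
  by rewrite /Gs /Op big_ord0 big_nat1 /= /D /= !expr0 !mul1r.
by rewrite gauss_step IH /Op big_ord_recr /= mulrC.
Qed.

Lemma xpow0 x y M k : x = 'X * y -> (M < k)%N -> cong M.+1 (x ^+ k) 0.
Proof.
move=> -> hk; exists ('X ^+ (k - M.+1) * y ^+ k).
by rewrite subr0 exprMn mulrA -exprD subnKC.
Qed.
Arguments xpow0 {x y M k}.

Lemma cong_prod1 K (I : Type) (r : seq I) (P : pred I) (F : I -> {poly int}) :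
  (forall i, P i -> cong K (F i) 1) -> cong K (\prod_(i <- r | P i) F i) 1.
Proof.
move=> h; apply: (@cong_trans _ _ (\prod_(i <- r | P i) (1 : {poly int}))).
  exact: cong_prod.
rewrite big1 //; exact: cong_refl.
Qed.

Lemma cong_mul1 K a b c : cong K a b -> cong K c 1 -> cong K (a * c) b.
Proof. by move=> h1 h2; have := cong_mul h1 h2; rewrite mulr1. Qed.
Lemma cong_sub0 K a c : cong K c 0 -> cong K (a - c) a.
Proof. by move=> h; have := cong_add (cong_refl K a) (cong_opp h); rewrite oppr0 addr0. Qed.
Lemma cong_mul0 K a c : cong K c 0 -> cong K (a * c) 0.
Proof. by move=> h; have := cong_mul (cong_refl K a) h; rewrite mulr0. Qed.

Lemma prod_ext (F : nat -> {poly int}) M k : (M <= k)%N ->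
  (forall i, (M <= i)%N -> cong M.+1 (F i) 1) ->
  cong M.+1 (\prod_(i < k) F i) (\prod_(i < M) F i).
Proof.
move=> hk h; elim: k hk => [|k IH] hk.
  have -> : M = 0%N by lia.
  exact: cong_refl.
case: (ltngtP M k.+1) => hM; last by subst M; apply: cong_refl.
  rewrite big_ord_recr /=.
  apply: cong_mul1; [apply: IH; lia | apply: h; lia].
lia.
Qed.

Lemma qp_ext x y M k : x = 'X * y -> (M <= k)%N -> cong M.+1 (qp x k) (qp x M).
Proof.
move=> hx hk; apply: (@prod_ext (fun i => 1 - x ^+ i.+1)) => // i hi.
apply: cong_sub0; apply: (xpow0 hx); lia.
Qed.

Definition Pinv (x : {poly int}) M := \prod_(i < M) \sum_(j < M.+1) x ^+ (i.+1 * j).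

Lemma geom (z : {poly int}) n : (\sum_(j < n) z ^+ j) * (1 - z) = 1 - z ^+ n.
Proof.
elim: n => [|n IH]; first by rewrite big_ord0 mul0r expr0 subrr.
by rewrite big_ord_recr /= mulrDl IH exprS; ring.
Qed.

Lemma Pinv_qp x y M : x = 'X * y -> cong M.+1 (Pinv x M * qp x M) 1.
Proof.
move=> hx; rewrite /Pinv /qp -big_split /=; apply: cong_prod1 => i _.
under eq_bigr do rewrite exprM.
rewrite geom -exprM; apply: cong_sub0; apply: (xpow0 hx); nia.
Qed.

Lemma cancel_inv K a b e : cong K (a * e) 1 -> cong K (b * e * e) e -> cong K (b * e) 1.
Proof.
move=> hae hbe.
apply: (@cong_trans _ _ (b * e * (a * e))).
  apply: cong_sym; apply: cong_mul1; [exact: cong_refl | exact: hae].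
have -> : b * e * (a * e) = (b * e * e) * a by ring.
apply: (@cong_trans _ _ (e * a)); first by apply: cong_mul => //; exact: cong_refl.
by rewrite mulrC.
Qed.

Lemma qb_lim x y M m k : x = 'X * y -> (M <= k)%N -> (k <= m)%N -> (M <= m - k)%N ->
  cong M.+1 (qb x m k * qp x M) 1.
Proof.
move=> hx h1 h2 h3; apply: (@cancel_inv _ (Pinv x M)); first exact: (@Pinv_qp x y M hx).
apply: (@cong_trans _ _ (qb x m k * qp x k * qp x (m - k))).
  apply: cong_mul; [apply: cong_mul; [exact: cong_refl|] |];
  apply: cong_sym; exact: (@qp_ext x y M _ hx).
rewrite qb_prod //; apply: (@qp_ext x y M _ hx); lia.
Qed.

Definition Theta (x : {poly int}) N := \sum_(0 <= i < (2 * N).+1) (-1) ^+ (i + N) * x ^+ D i N.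

Lemma D_small i N M : (D i N <= M)%N -> (N <= i + M)%N /\ (i <= N + M)%N.
Proof.
have H : forall d, (d <= d ^ 2)%N by case => // n; rewrite expnS expn1 leq_pmulr.
rewrite /D => h; have := leq_trans (H _) h; case: (leqP i N) => hi; lia.
Qed.

Lemma thmA x y M N : x = 'X * y -> (2 * M <= N)%N ->
  cong M.+1 (Theta x N) (Op x N * qp x M).
Proof.
move=> hx hMN; rewrite -gauss_fin /Gs /Theta mulr_suml.
apply: cong_sum => i _.
case: (leqP (D i N) M) => hD.
  have [h1 h2] := D_small _ _ _ hD.
  rewrite -mulrA; apply: cong_sym; apply: cong_mul1; first exact: cong_refl.
  apply: (@qb_lim x y M _ _ hx); lia.
apply: (@cong_trans _ _ 0).
  apply: cong_mul0; apply: (xpow0 hx); exact: hD.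
apply: cong_sym; rewrite -!mulrA; apply: cong_mul0.
rewrite mulrC; apply: cong_mul0; apply: (xpow0 hx); exact: hD.
Qed.

Lemma sum_ind (T : finType) (P : pred T) :
  \sum_(f : T) ((P f)%:R : int) = (#|[set f | P f]|)%:Z.
Proof.
rewrite (eq_bigr (fun f => if P f then 1 else 0)); last by move=> f _; case: (P f).
by rewrite -big_mkcond /= sumr_const cardsE natz.
Qed.

Lemma npart_coef n : (Pinv 'X n)`_n = (npart n)%:Z.
Proof.
rewrite /Pinv bigA_distr_bigA /= coef_sum /npart -sum_ind.
apply: eq_bigr => f _.
by rewrite prodrXr coefXn eq_sym.
Qed.

Definition Qp n : {poly int} := \prod_(i < n) (1 + (odd i.+1)%:R * 'X ^+ i.+1).

Lemma prod_ind n (P : 'I_n -> bool) : \prod_(i < n) ((P i)%:R : {poly int}) = ([forall i, P i])%:R.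
Proof.
case: forallP => h.
  by rewrite big1 // => i _; rewrite h.
have [i hi] : exists i, ~~ P i.
  by apply/existsP; rewrite -negb_forall; apply/negP => /forallP.
by rewrite (bigD1 i) //= (negbTE hi) mul0r.
Qed.

Lemma nqq_coef n : (Qp n)`_n = (nqq n)%:Z.
Proof.
rewrite /Qp.
have -> : \prod_(i < n) (1 + (odd i.+1)%:R * 'X ^+ i.+1) =
   \prod_(i < n) \sum_(b : bool) (if b then (odd i.+1)%:R * 'X ^+ i.+1 else 1 : {poly int}).
  by apply: eq_bigr => i _; rewrite big_bool /= addrC.
rewrite bigA_distr_bigA /= coef_sum /nqq -sum_ind.
apply: eq_bigr => f _.
have -> : \prod_(i < n) (if f i then (odd i.+1)%:R * 'X ^+ i.+1 else 1 : {poly int}) =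
  \prod_(i < n) (((f i ==> odd i.+1))%:R * 'X ^+ (i.+1 * f i)).
  by apply: eq_bigr => i _; case: (f i) => /=; rewrite ?muln1 ?muln0 ?expr0 ?mulr1.
rewrite big_split /= prod_ind prodrXr mulr_natl coefMn coefXn eq_sym.
by case: [forall _, _]; case: (_ == _).
Qed.

Definition Qo (K : nat) : {poly int} := \prod_(i < K) (1 + 'X ^+ (2 * i).+1).

Lemma Q2 K : Qp (2 * K) = Qo K.
Proof.
elim: K => [|K IH]; first by rewrite /Qp /Qo !big_ord0.
rewrite /Qp /Qo (_ : (2 * K.+1 = (2 * K).+2)%N); last lia.
rewrite !big_ord_recr /= -/(Qp (2 * K)) IH /Qo.
rewrite mul2n odd_double /= mul0r addr0 mulr1 mul1r.
by rewrite -mul2n.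
Qed.

Lemma qp2 K : qp 'X (2 * K) = Op 'X K * qp ('X ^+ 2) K.
Proof.
elim: K => [|K IH]; first by rewrite /qp /Op !big_ord0 mulr1.
rewrite (_ : (2 * K.+1 = (2 * K).+2)%N); last lia.
rewrite !qpS IH /Op big_ord_recr /= -exprM.
rewrite (_ : (2 * K.+1 = (2 * K).+2)%N); last lia.
ring.
Qed.

Lemma OpX2 K : Op ('X ^+ 2) K = Op 'X K * Qo K.
Proof.
rewrite /Op /Qo -big_split /=; apply: eq_bigr => i _.
rewrite -exprM (_ : (2 * (2 * i).+1 = (2 * i).+1 + (2 * i).+1)%N); last lia.
rewrite exprD; ring.
Qed.

Lemma coef_sign j (r : {poly int}) i : (((-1) ^+ j : {poly int}) * r)`_i = (-1) ^+ j * r`_i.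
Proof.
elim: j => [|j IH]; first by rewrite !expr0 !mul1r.
by rewrite !exprS !mulN1r !mulNr coefN IH.
Qed.

Lemma coef_compN (r : {poly int}) i : (r \Po (- 'X))`_i = (-1) ^+ i * r`_i.
Proof.
rewrite comp_polyE coef_sum.
under eq_bigr do rewrite coefZ -mulN1r exprMn coef_sign coefXn.
case: (ltnP i (size r)) => hi.
  rewrite (bigD1 (Ordinal hi)) //= eqxx mulr1 big1 ?addr0; first by rewrite mulrC.
  move=> j hj; case: eqP => e; last by rewrite !mulr0.
  by move: hj; rewrite -val_eqE /= e eqxx.
rewrite nth_default // mulr0 big1 // => j _.
have : (j < i)%N by apply: leq_trans (ltn_ord j) hi.
by rewrite ltn_neqAle eq_sym => /andP[/negbTE -> _]; rewrite !mulr0.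
Qed.

Lemma Op_comp K : Op 'X K = Qo K \Po (- 'X).
Proof.
rewrite /Op /Qo; elim: K => [|K IH]; first by rewrite !big_ord0 (comp_poly_multiplicative _).2.
rewrite !big_ord_recr /= IH comp_polyM comp_polyD (comp_poly_multiplicative _).2 comp_Xn_poly.
by rewrite -mulN1r exprMn -signr_odd /= mul2n odd_double /= expr1 !mulN1r.
Qed.

Lemma inv_uniq K a b e : cong K (a * e) 1 -> cong K (b * e) 1 -> cong K a b.
Proof.
move=> ha hb; apply: (@cong_trans _ _ (a * (b * e))).
  by apply: cong_sym; apply: cong_mul1; [exact: cong_refl | exact: hb].
have -> : a * (b * e) = (a * e) * b by ring.
by have := cong_mul ha (cong_refl K b); rewrite mul1r.
Qed.

Lemma hX : 'X = 'X * (1 : {poly int}). Proof. by rewrite mulr1. Qed.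
Lemma hX2 : 'X ^+ 2 = 'X * ('X : {poly int}). Proof. by rewrite expr2. Qed.

Lemma Pcoef n t : (t <= n)%N -> (Pinv 'X n)`_t = (npart t)%:Z.
Proof.
move=> htn; rewrite -npart_coef; apply: (@cong_coef t.+1) => //.
apply: cong_sym; apply: (@inv_uniq _ _ _ (qp 'X t)); first exact: (@Pinv_qp 'X 1 t hX).
apply: (@cong_trans _ _ (Pinv 'X n * qp 'X n)).
  apply: cong_mul; first exact: cong_refl.
  by apply: cong_sym; apply: (@qp_ext 'X 1 t n hX).
by apply: (@cong_le n.+1) => //; exact: (@Pinv_qp 'X 1 n hX).
Qed.

Lemma pz n k : p (n%:Z - k%:Z) = ('X ^+ k * Pinv 'X n)`_n.
Proof.
rewrite coefXnM; case: ltnP => h.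
  case E : (n%:Z - k%:Z) => [a|a] //=; exfalso; lia.
rewrite subzn //= Pcoef //; lia.
Qed.

Lemma pneg z : (z < 0)%R -> p z = 0.
Proof. by case: z. Qed.

Definition Sx (x : {poly int}) N := \sum_(1 <= j < N.+1) (-1) ^+ j * x ^+ (j ^ 2).

Lemma R1 (F : nat -> {poly int}) N :
  \sum_(N.+1 <= i < (2 * N).+1) F i = \sum_(1 <= j < N.+1) F (N + j)%N.
Proof.
rewrite (_ : N.+1 = 1 + N)%N // big_addn.
rewrite (_ : ((2 * N).+1 - N = 1 + N)%N); last lia.
by apply: eq_bigr => i _; rewrite addnC.
Qed.

Lemma R2 (F : nat -> {poly int}) N :
  \sum_(0 <= i < N) F i = \sum_(1 <= j < N.+1) F (N - j)%N.
Proof. by rewrite big_add1 /= big_nat_rev. Qed.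

Lemma sgn_eq a b : odd a = odd b -> (-1) ^+ a = (-1) ^+ b :> {poly int}.
Proof. by move=> h; rewrite -signr_odd h signr_odd. Qed.

Lemma ThetaE x N : Theta x N = 1 + (Sx x N + Sx x N).
Proof.
rewrite /Theta (@big_cat_nat _ _ _ N 0 (2 * N).+1) //=; last lia.
have hN : (N < (2 * N).+1)%N by lia.
rewrite (@big_ltn _ _ _ N (2 * N).+1 _ hN) /=.
rewrite R1 R2.
have -> : (-1) ^+ (N + N) * x ^+ D N N = 1.
  rewrite /D leqnn subnn expnS mul0n expr0 mulr1 (@sgn_eq _ 0) ?expr0 //.
  by rewrite addnn odd_double.
have e1 : \sum_(1 <= j < N.+1) (-1) ^+ (N - j + N) * x ^+ D (N - j) N =
    Sx x N.
  apply: eq_big_nat => j /andP[h1 h2].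
  rewrite /D (_ : (N - j <= N)%N) ?leq_subr // (_ : (N - (N - j) = j)%N); last lia.
  congr (_ * _); apply: sgn_eq.
  by rewrite (_ : (N - j + N = j + (N - j).*2)%N) ?oddD ?odd_double ?addbF //; lia.
have e2 : \sum_(1 <= j < N.+1) (-1) ^+ (N + j + N) * x ^+ D (N + j) N =
    Sx x N.
  apply: eq_big_nat => j /andP[h1 h2].
  rewrite /D (_ : (N + j <= N)%N = false); last lia.
  rewrite (_ : (N + j - N = j)%N); last lia.
  congr (_ * _); apply: sgn_eq.
  by rewrite (_ : (N + j + N = j + N.*2)%N) ?oddD ?odd_double ?addbF //; lia.
transitivity (Sx x N + (1 + Sx x N)); last by ring.
by f_equal; [exact: e1 | f_equal; exact: e2].
Qed.

Lemma Sx_trunc x y n N : x = 'X * y -> (n <= N)%N -> cong n.+1 (Sx x N) (Sx x n).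
Proof.
move=> hx hnN; rewrite /Sx (@big_cat_nat _ _ _ n.+1 1 N.+1) //=.
have h0 : cong n.+1 (\sum_(n.+1 <= i < N.+1) (-1) ^+ i * x ^+ (i ^ 2)) 0.
  rewrite big_nat_cond.
  apply: (@cong_trans _ _ (\sum_(n.+1 <= i < N.+1 | (n.+1 <= i < N.+1)%N && true) (0 : {poly int}))).
    apply: cong_sum => i /andP[/andP[hi _] _].
    apply: cong_mul0; apply: (xpow0 hx); rewrite expnS expn1; nia.
  rewrite big1 //; exact: cong_refl.
by have := cong_add (cong_refl _ (\sum_(1 <= i < n.+1) (-1) ^+ i * x ^+ (i ^ 2))) h0; rewrite addr0.
Qed.

Lemma coef_Sx (x : {poly int}) K (Q : {poly int}) i :
  (Sx x K * Q)`_i = \sum_(1 <= j < K.+1) (-1) ^+ j * (x ^+ (j ^ 2) * Q)`_i.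
Proof.
rewrite /Sx mulr_suml coef_sum; apply: eq_bigr => j _.
by rewrite -mulrA coef_sign.
Qed.

Lemma main_cong n :
  cong n.+1 (Theta 'X (2 * n) * Pinv 'X n) (Op 'X (2 * n)) /\
  cong n.+1 (Theta ('X ^+ 2) (2 * n) * Pinv 'X n) (Qo (2 * n)).
Proof.
have hPq : cong n.+1 (qp 'X n * Pinv 'X n) 1 by rewrite mulrC; exact: (@Pinv_qp 'X 1 n hX).
split.
  apply: (@cong_trans _ _ (Op 'X (2 * n) * qp 'X n * Pinv 'X n)).
    apply: cong_mul; last exact: cong_refl.
    by apply: (@thmA 'X 1 n (2 * n) hX).
  by rewrite -mulrA; apply: cong_mul1 => //; exact: cong_refl.
apply: (@cong_trans _ _ (Op ('X ^+ 2) (2 * n) * qp ('X ^+ 2) n * Pinv 'X n)).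
  apply: cong_mul; last exact: cong_refl.
  by apply: (@thmA ('X ^+ 2) 'X n (2 * n) hX2).
rewrite OpX2.
apply: (@cong_trans _ _ (Qo (2 * n) * (Op 'X n * qp ('X ^+ 2) n) * Pinv 'X n)).
  have -> : Op 'X (2 * n) * Qo (2 * n) * qp ('X ^+ 2) n * Pinv 'X n =
    Qo (2 * n) * (Op 'X (2 * n) * qp ('X ^+ 2) n * Pinv 'X n) by ring.
  have -> : Qo (2 * n) * (Op 'X n * qp ('X ^+ 2) n) * Pinv 'X n =
    Qo (2 * n) * (Op 'X n * qp ('X ^+ 2) n * Pinv 'X n) by ring.
  apply: cong_mul; first exact: cong_refl.
  apply: cong_mul; last exact: cong_refl.
  apply: cong_mul; last exact: cong_refl.
  apply: (@prod_ext (fun i => 1 - 'X ^+ (2 * i).+1)); first lia.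
  move=> i hi; apply: cong_sub0; apply: (@xpow0 'X 1 n _ hX); lia.
rewrite -qp2 -mulrA; apply: cong_mul1; first exact: cong_refl.
apply: (@cong_trans _ _ (qp 'X n * Pinv 'X n)) => //.
apply: cong_mul; last exact: cong_refl.
apply: (@qp_ext 'X 1 n _ hX); lia.
Qed.

Lemma Qo_coef n : (Qo (2 * n))`_n = (nqq n)%:Z.
Proof.
rewrite -Q2 -nqq_coef; apply: (@cong_coef n.+1) => //.
apply: (@prod_ext (fun i => 1 + (odd i.+1)%:R * 'X ^+ i.+1)); first lia.
move=> i hi; rewrite -[X in cong _ _ X]addr0; apply: cong_add; first exact: cong_refl.
apply: cong_mul0; apply: (@xpow0 'X 1 n _ hX); lia.
Qed.

Theorem theorem1 (n : int) :
  p n + \sum_(1 <= j < `|n|%N.+1) (-1) ^+ j * (p (n - (j ^ 2)%N%:Z) + p (n - (2 * j ^ 2)%N%:Z))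
  = (if odd `|n|%N then 0 else qq n).
Proof.
case: n => [n|n]; last first.
  rewrite /= big1 ?addr0; first by case: ifP.
  move=> j _; rewrite !pneg ?addr0 ?mulr0 //; lia.
rewrite [absz _]/=.
set Pn := Pinv 'X n.
have hp : p (Posz n) = Pn`_n by rewrite /= Pcoef.
rewrite hp.
under eq_bigr do rewrite !pz.
set L := (X in X = _).
have [c1 c2] := main_cong n.
have k1 := cong_coef c1 (ltnSn n).
have k2 := cong_coef c2 (ltnSn n).
rewrite Op_comp coef_compN Qo_coef in k1.
rewrite Qo_coef in k2.
have tr : forall x y, x = 'X * y ->
    (Theta x (2 * n) * Pn)`_n = Pn`_n + ((Sx x n * Pn)`_n + (Sx x n * Pn)`_n).
  move=> x y hx; rewrite ThetaE mulrDl mul1r mulrDl coefD coefD.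
  have e : (Sx x (2 * n) * Pn)`_n = (Sx x n * Pn)`_n.
    apply: (@cong_coef n.+1) => //; apply: cong_mul; last exact: cong_refl.
    apply: (@Sx_trunc x y n (2 * n) hx); lia.
  by rewrite e.
rewrite (tr _ _ hX) coef_Sx in k1.
rewrite (tr _ _ hX2) coef_Sx in k2.
move: k2; under eq_bigr do rewrite -exprM; move=> k2.
rewrite /L; under eq_bigr do rewrite mulrDr; rewrite big_split /=.
move: k1 k2; rewrite /= -signr_odd.
rewrite -/Pn.
set A := \sum_(1 <= i < n.+1) (-1) ^+ i * ('X^(i ^ 2) * Pn)`_n.
set B := \sum_(1 <= i < n.+1) (-1) ^+ i * ('X^(2 * i ^ 2) * Pn)`_n.
case: (odd n); rewrite ?expr1 ?expr0 => k1 k2; lia.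
Qed.
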